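(* Let $X$ be a $T_1$ topological space. The following are equivalent: (i) $C_c(X)_F=C_c(X)$; (ii) $X$ is discrete; (iii) $C_c(X)_F$ is a quotient ring of $C_c(X)$, i.e. for every nonzero $s\in C_c(X)_F$ there exists $r\in C_c(X)$ with $0\neq sr\in C_c(X)$.
   Context: $C_c(X)_F$ denotes the set of all functions $f:X\to\mathbb{R}$ whose range is countable and whose set of points of discontinuity is finite; $C_c(X)$ denotes the ring of continuous functions $X\to\mathbb{R}$ with countable range, a subring of $C_c(X)_F$. *)

(* Defs.v *)
From mathcomp Require Import all_boot all_order all_algebra.
From mathcomp Require Import all_classical all_reals all_analysis.
Set Implicit Arguments. Unset Strict Implicit. Unset Printing Implicit Defensive.
Import Order.TTheory GRing.Theory Num.Theory.
Import numFieldNormedType.Exports.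
Local Open Scope classical_set_scope.
Local Open Scope ring_scope.

Definition discrete_topological (X : topologicalType) : Prop :=
  forall A : set X, open A.

Definition discontinuities (X : topologicalType) (R : realType) (f : X -> R)
  : set X := [set x : X | ~ {for x, continuous f}].

Definition CcF (X : topologicalType) (R : realType) : set (X -> R) :=
  [set f | countable (range f) /\ finite_set (discontinuities f)].

Definition Cc (X : topologicalType) (R : realType) : set (X -> R) :=
  [set f | countable (range f) /\ continuous f].

(* Main.v *)
Require Import Defs.
From mathcomp Require Import all_boot all_order all_algebra.
From mathcomp Require Import all_classical all_reals all_analysis.
Import Order.TTheory GRing.Theory Num.Theory.
Import numFieldNormedType.Exports.
Local Open Scope classical_set_scope.
Local Open Scope ring_scope.

Section Helpers.
Variables (R : realType) (X : topologicalType).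

Definition ind (x : X) : X -> R := fun y => (y == x)%:R.

Lemma ind_CcF (x : X) : accessible_space X -> ind x \in @CcF X R.
Proof.
move=> hT; apply/mem_set; split.
  apply: finite_set_countable; apply: sub_finite_set (finite_set2 (0:R) 1).
  move=> _ [y _ <-]; rewrite /ind; case: (y == x); [by right|by left].
apply: sub_finite_set (finite_set1 x) => y /= hy.
apply/eqP/negPn/negP => hyx; apply: hy.
have [A [oA Ay nAx]] := hT y x hyx.
apply: cvg_near_cst.
apply: filterS (open_nbhs_nbhs (conj oA (set_mem Ay))) => z Az.
rewrite /ind; case: eqP => [zx|]; last by rewrite (negbTE hyx).
by move: nAx; rewrite -zx inE /= => /(_ Az).
Qed.

Lemma singleton_open_discrete : (forall x : X, open [set x]) -> discrete_topological X.
Proof.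
move=> h A; rewrite openE => x Ax; rewrite /interior.
apply: filterS (open_nbhs_nbhs (conj (h x) erefl)) => z -> //.
Qed.

Lemma discrete_cont (f : X -> R) : discrete_topological X -> continuous f.
Proof.
move=> d x; apply: cvg_near_cst.
by apply: filterS (open_nbhs_nbhs (conj (d [set x]) erefl)) => z ->.
Qed.

Lemma cont_ind_open (g : X -> R) (x : X) : continuous g -> g x != 0 ->
  (forall y, y != x -> g y = 0) -> open [set x].
Proof.
move=> cg gx gy.
have -> : [set x] = g @^-1` (~` [set 0]).
  apply/seteqP; split => y /=.
    by move=> ->; apply/eqP.
  by move=> hy; apply/eqP/negPn/negP => /gy.
apply: open_comp; first by move=> y _; apply: cg.
by rewrite openC; apply: closed_eq.
Qed.

End Helpers.
Arguments ind R {X}.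
Arguments ind_CcF R {X}.

Theorem theorem5p1 (R : realType) (X : topologicalType)
  (hT1 : @accessible_space X) :
  (@CcF X R = @Cc X R <-> @discrete_topological X) /\
  (@discrete_topological X <->
     (forall s : X -> R, s \in @CcF X R -> s != (fun _ => 0) ->
        exists r : X -> R, [/\ r \in @Cc X R, (s \* r) != (fun _ => 0)
                             & (s \* r) \in @Cc X R])).
Proof.
have ind1 (x : X) : ind R x x = 1 by rewrite /ind eqxx.
have ind0 (x y : X) : y != x -> ind R x y = 0 by move=> h; rewrite /ind (negbTE h).
split; split.
- move=> h; apply: singleton_open_discrete => x.
  have := ind_CcF R x hT1; rewrite h => /set_mem [_ c].
  apply: (@cont_ind_open R X _ x c); first by rewrite ind1 oner_eq0.
  exact: ind0.
- move=> d; apply/seteqP; split => f [c1 c2]; split => //.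
    exact: discrete_cont.
  apply: sub_finite_set (finite_set0 X) => y /= hy; apply: hy; exact: c2.
- move=> d s /set_mem [cs _] s0; exists (fun _ => 1); split.
  + apply/mem_set; split; last by move=> x; apply: cvg_cst.
    apply: finite_set_countable; apply: sub_finite_set (finite_set1 (1:R)).
    by move=> _ [y _ <-].
  + by have -> : s \* (fun _ => 1) = s by apply/funext => y /=; rewrite mulr1.
  + have -> : s \* (fun _ => 1) = s by apply/funext => y /=; rewrite mulr1.
    by apply/mem_set; split => //; apply: discrete_cont.
- move=> h; apply: singleton_open_discrete => x.
  have s0 : ind R x != (fun _ => 0).
    by apply/eqP => /(congr1 (fun f => f x)) /eqP; rewrite ind1 oner_eq0.
  have [r [_ nz /set_mem [_ c]]] := h _ (ind_CcF R x hT1) s0.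
  have gy y : y != x -> (ind R x \* r) y = 0 by move=> hy /=; rewrite ind0 ?mul0r.
  apply: (@cont_ind_open R X _ x c _ gy).
  apply/negP => /eqP gx; move/eqP: nz; apply; apply/funext => y.
  by case: (eqVneq y x) => [->|/gy].
Qed.
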